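(* Let $N,\mu,\beta,\sigma,\gamma,p>0$ and $0<\rho<1$ and consider $$\begin{aligned}S'&=\mu N-\tfrac{\beta}{N}S(1-\rho)I-\tfrac{p}{N}S-\mu S, & E'&=\tfrac{\beta}{N}S(1-\rho)I-(\sigma+\mu) E, & I'&=\sigma E-(\gamma+\mu) I,\\ R'&=\gamma I-\mu R, & V'&=\tfrac{p}{N}S-\mu V,\end{aligned}$$ on the invariant region $\Sigma=\{(S,E,I,R,V)\in\mathbb{R}_+^5: S+E+I+R+V=N\}$. Let $\mathcal{R}_0=\dfrac{\mu N\sigma\beta(1-\rho)}{(\sigma+\mu)(\gamma+\mu)(p+\mu N)}$. If $\mathcal{R}_0<1$, then the disease-free equilibrium $P^*=\left(\frac{\mu N^2}{p+\mu N},0,0,0,\frac{pN}{p+\mu N}\right)$ is globally asymptotically stable in $\Sigma$.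
   Context: SEIR model with vaccination at constant effective rate $p$ and equal birth/death rate $\mu$. Global asymptotic stability in $\Sigma$ means $P^*$ is stable and every solution starting in $\Sigma$ converges to $P^*$ as $t\to+\infty$. *)

(* Defs.v *)
From Stdlib Require Import Reals.
From Coquelicot Require Import Coquelicot.
Open Scope R_scope.

Definition in_Sigma (N s e i r v : R) : Prop :=
  0 <= s /\ 0 <= e /\ 0 <= i /\ 0 <= r /\ 0 <= v /\ s + e + i + r + v = N.

Definition basic_repr_number (N mu beta sigma gamma p rho : R) : R :=
  mu * N * sigma * beta * (1 - rho) / ((sigma + mu) * (gamma + mu) * (p + mu * N)).

Definition Sstar (N mu p : R) : R := mu * N ^ 2 / (p + mu * N).
Definition Vstar (N mu p : R) : R := p * N / (p + mu * N).

Definition dist_Pstar (N mu p s e i r v : R) : R :=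
  Rmax (Rabs (s - Sstar N mu p))
   (Rmax (Rabs e) (Rmax (Rabs i) (Rmax (Rabs r) (Rabs (v - Vstar N mu p))))).

Definition is_solution (N mu beta sigma gamma p rho : R)
  (S E I Rr V : R -> R) : Prop :=
  (filterlim S (at_right 0) (locally (S 0)) /\
   filterlim E (at_right 0) (locally (E 0)) /\
   filterlim I (at_right 0) (locally (I 0)) /\
   filterlim Rr (at_right 0) (locally (Rr 0)) /\
   filterlim V (at_right 0) (locally (V 0))) /\
  (forall t, 0 < t ->
     is_derive S t (mu * N - beta / N * S t * (1 - rho) * I t
                    - p / N * S t - mu * S t) /\
     is_derive E t (beta / N * S t * (1 - rho) * I t - (sigma + mu) * E t) /\
     is_derive I t (sigma * E t - (gamma + mu) * I t) /\
     is_derive Rr t (gamma * I t - mu * Rr t) /\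
     is_derive V t (p / N * S t - mu * V t)).

Definition GAS_in_Sigma (N mu beta sigma gamma p rho : R) : Prop :=
  (forall eps, 0 < eps -> exists delta, 0 < delta /\
     forall S E I Rr V : R -> R,
       is_solution N mu beta sigma gamma p rho S E I Rr V ->
       in_Sigma N (S 0) (E 0) (I 0) (Rr 0) (V 0) ->
       dist_Pstar N mu p (S 0) (E 0) (I 0) (Rr 0) (V 0) < delta ->
       forall t, 0 <= t ->
         dist_Pstar N mu p (S t) (E t) (I t) (Rr t) (V t) < eps) /\
  (forall S E I Rr V : R -> R,
     is_solution N mu beta sigma gamma p rho S E I Rr V ->
     in_Sigma N (S 0) (E 0) (I 0) (Rr 0) (V 0) ->
     is_lim S p_infty (Sstar N mu p) /\
     is_lim E p_infty 0 /\
     is_lim I p_infty 0 /\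
     is_lim Rr p_infty 0 /\
     is_lim V p_infty (Vstar N mu p)).

(* Main.v *)
Require Import Defs.
From Stdlib Require Import Reals Lra Psatz.
From Coquelicot Require Import Coquelicot.
Open Scope R_scope.

Definition rc (f : R -> R) (a : R) := filterlim f (at_right a) (locally (f a)).

Lemma rc_plus f g a : rc f a -> rc g a -> rc (fun t => f t + g t) a.
Proof.
  intros Hf Hg. unfold rc.
  eapply filterlim_comp_2; [exact Hf | exact Hg | ].
  exact (filterlim_plus (K:=R_AbsRing) (V:=R_NormedModule) (f a) (g a)).
Qed.

Lemma rc_mult f g a : rc f a -> rc g a -> rc (fun t => f t * g t) a.
Proof.
  intros Hf Hg. unfold rc.
  eapply filterlim_comp_2; [exact Hf | exact Hg | ].
  exact (filterlim_mult (K:=R_AbsRing) (f a) (g a)).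
Qed.

Lemma rc_const c a : rc (fun _ => c) a.
Proof. unfold rc. apply filterlim_const. Qed.

Lemma rc_comp (h : R -> R) f a : continuous h (f a) -> rc f a -> rc (fun t => h (f t)) a.
Proof.
  intros Hh Hf. unfold rc. eapply filterlim_comp; [exact Hf | exact Hh].
Qed.

Lemma rc_of_derive f a d : is_derive f a d -> rc f a.
Proof.
  intros H. unfold rc.
  apply (filterlim_filter_le_1 (F := locally a)).
  - apply filter_le_within.
  - exact (ex_derive_continuous (K:=R_AbsRing) (V:=R_NormedModule) f a (ex_intro _ d H)).
Qed.

Lemma rc_ext f g a : rc f a -> (forall t, a <= t -> f t = g t) -> rc g a.
Proof.
  intros Hf He. unfold rc in *.
  rewrite <- (He a (Rle_refl a)).
  eapply filterlim_ext_loc; [ | exact Hf].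
  exists (mkposreal 1 Rlt_0_1). intros y _ Hy. apply He. lra.
Qed.
Lemma ball_R x e y : ball x e y -> x - e < y < x + e.
Proof. intros H. change (Rabs (y - x) < e) in H. apply Rabs_def2 in H. lra. Qed.
Lemma loc_gt x a : a < x -> locally x (fun y => a < y).
Proof. intros H. exists (mkposreal (x - a) ltac:(lra)). intros y Hy. apply ball_R in Hy. simpl in Hy. lra. Qed.

Lemma cont_of_derive (f : R -> R) (x d : R) : is_derive f x d -> continuous f x.
Proof. intros H. exact (ex_derive_continuous (K:=R_AbsRing) (V:=R_NormedModule) f x (ex_intro _ d H)). Qed.

Lemma mono (f df : R -> R) (a b : R) : a < b -> rc f a -> (forall x, a < x -> is_derive f x (df x)) ->
  (forall x, a < x <= b -> df x <= 0) -> f b <= f a.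
Proof.
  intros Hab Hrc Hd Hneg.
  destruct (C0_extension_left f (f a) a (b+1)) as [g [Hc [He Ha]]]; try lra.
  - intros c Hc. apply (cont_of_derive f c (df c)). apply Hd. lra.
  - exact Hrc.
  set (df' := fun x => if Rlt_dec a x then df x else 0).
  assert (Hg : forall x, a < x -> is_derive g x (df x)).
  { intros x Hx. apply is_derive_ext_loc with f; [|apply Hd; lra].
    generalize (loc_gt x a Hx). apply filter_imp. intros y Hy. symmetry. apply He. exact Hy. }
  destruct (MVT_gen g a b df') as [c [Hc1 Hc2]].
  - rewrite Rmin_left, Rmax_right by lra. intros x Hx. unfold df'.
    destruct (Rlt_dec a x); [apply Hg; lra | lra].
  - rewrite Rmin_left, Rmax_right by lra. intros x Hx.
    apply continuity_pt_filterlim. apply Hc. lra.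
  - rewrite Rmin_left, Rmax_right in Hc1 by lra.
    assert (df' c <= 0).
    { unfold df'. destruct (Rlt_dec a c); [apply Hneg; lra | lra]. }
    rewrite He in Hc2 by lra. rewrite Ha in Hc2. nra.
Qed.


Lemma exp_inv_mul x : exp x * exp (- x) = 1.
Proof. rewrite <- exp_plus. replace (x + - x) with 0 by ring. apply exp_0. Qed.

Lemma cmp (f df : R -> R) (a k M : R) : 0 < k -> rc f a -> (forall x, a < x -> is_derive f x (df x)) ->
  (forall x, a < x -> df x <= - k * f x + M) ->
  forall t, a <= t -> f t <= M / k + (f a - M / k) * exp (- k * (t - a)).
Proof.
  intros Hk Hrc Hd Hle t Ht.
  destruct (Req_dec t a) as [->|Hta].
  { replace (- k * (a - a)) with 0 by ring. rewrite exp_0. lra. }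
  set (h := fun t => (f t - M / k) * exp (k * (t - a))).
  set (dh := fun x => (df x + k * (f x - M / k)) * exp (k * (x - a))).
  assert (Hdh : forall x, a < x -> is_derive h x (dh x)).
  { intros x Hx. unfold h, dh. auto_derive.
    - exists (df x). apply Hd. exact Hx.
    - match goal with |- context [Derive ?g x] => replace (Derive g x) with (df x) end; [replace (x + - a) with (x - a) by ring; ring|]. symmetry. apply is_derive_unique. apply Hd. exact Hx. }
  assert (Hrch : rc h a).
  { unfold h. apply rc_mult.
    - unfold Rminus. apply rc_plus; [exact Hrc | apply rc_const].
    - apply (rc_of_derive _ _ (k * exp (k * (a - a)))). auto_derive; [auto | replace (a + - a) with (a - a) by ring; ring]. }
  assert (Hm := mono h dh a t ltac:(lra) Hrch Hdh).
  assert (Hm' : h t <= h a).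
  { apply Hm. intros x Hx. unfold dh.
    assert (0 < exp (k * (x - a))) by apply exp_pos.
    specialize (Hle x ltac:(lra)).
    assert (k * (M / k) = M) by (field; lra).
    assert (df x + k * (f x - M / k) <= 0) by lra. nra. }
  unfold h in Hm'. replace (k * (a - a)) with 0 in Hm' by ring. rewrite exp_0 in Hm'.
  assert (He := exp_inv_mul (k * (t - a))).
  assert (0 < exp (- k * (t - a))) by apply exp_pos.
  replace (- k * (t - a)) with (- (k * (t - a))) in * by ring.
  assert (f t - M / k = (f t - M / k) * exp (k * (t - a)) * exp (- (k * (t - a)))).
  { rewrite Rmult_assoc, He. ring. }
  nra.
Qed.

Lemma exp_le1 x : x <= 0 -> exp x <= 1.
Proof. intros H. rewrite <- exp_0. destruct (Req_dec x 0) as [->|Hn]; [lra|].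
  left. apply exp_increasing. lra. Qed.

Lemma cmp_max (f df : R -> R) (a k M : R) : 0 < k -> rc f a -> (forall x, a < x -> is_derive f x (df x)) ->
  (forall x, a < x -> df x <= - k * f x + M) ->
  forall t, a <= t -> f t <= Rmax (f a) (M / k).
Proof.
  intros Hk Hrc Hd Hle t Ht.
  assert (H := cmp f df a k M Hk Hrc Hd Hle t Ht).
  assert (0 < exp (- k * (t - a))) by apply exp_pos.
  assert (exp (- k * (t - a)) <= 1) by (apply exp_le1; nra).
  destruct (Rle_dec (M / k) (f a)).
  - rewrite Rmax_left by lra. nra.
  - rewrite Rmax_right by lra. nra.
Qed.

Lemma exp_small k C eps T : 0 < k -> 0 < eps -> exists T', forall t, T' < t -> C * exp (- k * (t - T)) < eps.
Proof.
  intros Hk He.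
  exists (T + Rabs (ln (eps / (Rabs C + 1))) / k).
  intros t Ht.
  assert (Hpos : 0 < eps / (Rabs C + 1)) by (apply Rdiv_lt_0_compat; [lra | pose proof (Rabs_pos C); lra]).
  assert (Hl : - k * (t - T) < ln (eps / (Rabs C + 1))).
  { assert (Rabs (ln (eps / (Rabs C + 1))) / k < t - T) by lra.
    assert (Rabs (ln (eps / (Rabs C + 1))) < k * (t - T)).
    { apply (Rmult_lt_compat_l k) in H; [|lra]. field_simplify in H; lra. }
    pose proof (Rle_abs (- ln (eps / (Rabs C + 1)))). rewrite Rabs_Ropp in H1. lra. }
  apply exp_increasing in Hl. rewrite exp_ln in Hl by exact Hpos.
  assert (0 < exp (- k * (t - T))) by apply exp_pos.
  pose proof (Rle_abs C). pose proof (Rabs_pos C).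
  assert ((Rabs C + 1) * exp (- k * (t - T)) < eps).
  { apply (Rmult_lt_compat_l (Rabs C + 1)) in Hl; [|lra]. field_simplify in Hl; lra. }
  nra.
Qed.

Lemma lim_eps (f : R -> R) (l : R) :
  (forall eps, 0 < eps -> exists T, forall t, T < t -> Rabs (f t - l) < eps) -> is_lim f p_infty l.
Proof.
  intros H. apply is_lim_spec. intros eps. destruct (H eps (cond_pos eps)) as [T HT].
  exists T. exact HT.
Qed.

Lemma eps_lim (f : R -> R) (l : R) : is_lim f p_infty l ->
  forall eps, 0 < eps -> exists T, forall t, T < t -> Rabs (f t - l) < eps.
Proof.
  intros H eps He. apply is_lim_spec in H. destruct (H (mkposreal eps He)) as [T HT].
  exists T. exact HT.
Qed.

Lemma is_derive_neg (f : R -> R) (x d : R) : is_derive f x d -> is_derive (fun t => - f t) x (- d).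
Proof. intros H. exact (is_derive_opp f x d H). Qed.

Lemma rc_neg (f : R -> R) a : rc f a -> rc (fun t => - f t) a.
Proof.
  intros H. apply (rc_comp Ropp f a); [|exact H].
  apply (cont_of_derive Ropp (f a) (-1)). auto_derive; [auto | ring].
Qed.

Lemma lim_lin (f g : R -> R) (k L : R) : 0 < k ->
  (forall t, 0 < t -> is_derive f t (- k * f t + g t)) -> is_lim g p_infty L ->
  is_lim f p_infty (L / k).
Proof.
  intros Hk Hd Hg. apply lim_eps. intros eps He.
  set (e1 := eps * k / 2).
  assert (He1 : 0 < e1) by (unfold e1; nra).
  destruct (eps_lim g L Hg e1 He1) as [T1 HT1].
  set (T := Rmax T1 0 + 1).
  assert (HT0 : 0 < T) by (unfold T; pose proof (Rmax_r T1 0); lra).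
  assert (HTT1 : T1 < T) by (unfold T; pose proof (Rmax_l T1 0); lra).
  assert (Hrc : rc f T) by (apply (rc_of_derive f T _ (Hd T HT0))).
  assert (Hup := cmp f (fun t => - k * f t + g t) T k (L + e1) Hk Hrc
                   (fun x Hx => Hd x ltac:(lra))).
  assert (Hlo := cmp (fun t => - f t) (fun t => - (- k * f t + g t)) T k (- L + e1) Hk (rc_neg f T Hrc)
                   (fun x Hx => is_derive_neg _ _ _ (Hd x ltac:(lra)))).
  destruct (exp_small k (f T - (L + e1) / k) (eps / 2) T Hk ltac:(lra)) as [T2 HT2].
  destruct (exp_small k (- f T - (- L + e1) / k) (eps / 2) T Hk ltac:(lra)) as [T3 HT3].
  exists (Rmax T (Rmax T2 T3)). intros t Ht.
  pose proof (Rmax_l T (Rmax T2 T3)). pose proof (Rmax_r T (Rmax T2 T3)).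
  pose proof (Rmax_l T2 T3). pose proof (Rmax_r T2 T3).
  assert (Hu : f t <= (L + e1) / k + (f T - (L + e1) / k) * exp (- k * (t - T))).
  { apply Hup; [|lra]. intros x Hx. specialize (HT1 x ltac:(lra)).
    apply Rabs_def2 in HT1. lra. }
  assert (Hl : - f t <= (- L + e1) / k + (- f T - (- L + e1) / k) * exp (- k * (t - T))).
  { apply Hlo; [|lra]. intros x Hx. specialize (HT1 x ltac:(lra)).
    apply Rabs_def2 in HT1. lra. }
  specialize (HT2 t ltac:(lra)). specialize (HT3 t ltac:(lra)).
  assert (Hek : e1 / k = eps / 2) by (unfold e1; field; lra).
  assert ((L + e1) / k = L / k + e1 / k) by (field; lra).
  assert ((- L + e1) / k = - (L / k) + e1 / k) by (field; lra).
  apply Rabs_def1; lra.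
Qed.

Lemma bound_compact (f : R -> R) (b : R) : rc f 0 -> (forall x, 0 < x -> exists d, is_derive f x d) ->
  0 <= b -> exists M, forall t, 0 <= t <= b -> Rabs (f t) <= M.
Proof.
  intros Hrc Hd Hb.
  destruct (C0_extension_left f (f 0) 0 (b+1)) as [g [Hc [He Ha]]]; try lra.
  - intros c Hc. destruct (Hd c ltac:(lra)) as [d Hdd]. apply (cont_of_derive f c d Hdd).
  - exact Hrc.
  destruct (continuity_ab_maj (fun t => Rabs (g t)) 0 b Hb) as [Mx [HM _]].
  - intros c Hc'. apply (continuity_pt_comp g Rabs).
    + apply continuity_pt_filterlim. apply Hc. lra.
    + apply Rcontinuity_abs.
  - exists (Rabs (g Mx)). intros t Ht.
    destruct (Req_dec t 0) as [->|Hn].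
    + rewrite <- Ha. apply (HM 0). lra.
    + rewrite <- He by lra. apply HM. lra.
Qed.

Definition ng (y : R) := Rmin y 0.

Lemma ng_sq_derive x : is_derive (fun y => ng y * ng y) x (2 * ng x).
Proof.
  unfold ng.
  destruct (Rtotal_order x 0) as [Hx|[Hx|Hx]].
  - rewrite Rmin_left by lra.
    apply is_derive_ext_loc with (fun y => y * y).
    + exists (mkposreal (- x) ltac:(lra)). intros y Hy. apply ball_R in Hy. simpl in Hy.
      rewrite Rmin_left by lra. reflexivity.
    + auto_derive; [auto | ring].
  - subst x. apply is_derive_Reals. intros eps Heps.
    exists (mkposreal eps Heps). intros h Hh Hlt. simpl in Hlt.
    rewrite (Rmin_left 0 0) by lra. rewrite Rplus_0_l.
    destruct (Rle_dec h 0).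
    + rewrite Rmin_left by lra.
      replace ((h * h - 0 * 0) / h - 2 * 0) with h by (field; exact Hh). exact Hlt.
    + rewrite Rmin_right by lra.
      replace ((0 * 0 - 0 * 0) / h - 2 * 0) with 0 by (field; exact Hh). rewrite Rabs_R0. exact Heps.
  - rewrite Rmin_right by lra.
    apply is_derive_ext_loc with (fun y => 0).
    + exists (mkposreal x ltac:(lra)). intros y Hy. apply ball_R in Hy. simpl in Hy.
      rewrite Rmin_right by lra. rewrite Rmult_0_l. reflexivity.
    + auto_derive; [auto | ring].
Qed.

Lemma ng_cont x : continuous (fun y => ng y * ng y) x.
Proof. apply (cont_of_derive _ x _ (ng_sq_derive x)). Qed.

Lemma ng_comp_derive (f : R -> R) x d : is_derive f x d -> is_derive (fun t => ng (f t) * ng (f t)) x (2 * ng (f x) * d).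
Proof.
  intros H. assert (Hc := is_derive_comp (fun y => ng y * ng y) f x _ _ (ng_sq_derive (f x)) H).
  simpl in Hc. replace (2 * ng (f x) * d) with (scal d (2 * ng (f x))). exact Hc.
  change (d * (2 * ng (f x)) = 2 * ng (f x) * d). ring.
Qed.
Lemma sqp x : 0 <= x * x.
Proof. apply Rle_0_sqr. Qed.

Lemma ng_cases y : (y <= 0 /\ ng y = y) \/ (0 <= y /\ ng y = 0).
Proof. unfold ng. destruct (Rle_dec y 0); [left; split; [lra| apply Rmin_left; lra] | right; split; [lra | apply Rmin_right; lra]]. Qed.

Lemma abs_bnd x M : Rabs x <= M -> - M <= x <= M.
Proof. intros H. pose proof (Rle_abs x). pose proof (Rle_abs (-x)). rewrite Rabs_Ropp in *. lra. Qed.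

Lemma term1 s i muN c k M : 0 <= muN -> 0 < c -> 0 <= k -> Rabs i <= M ->
  2 * ng s * (muN - c * s * i - k * s) <= 2 * c * M * (ng s * ng s).
Proof.
  intros H1 H2 H3 H4. apply abs_bnd in H4.
  destruct (ng_cases s) as [[Hs ->]|[Hs ->]]; [|nra].
  assert (s * muN <= 0) by nra. assert (0 <= k * (s * s)) by nra.
  assert (0 <= c * (s * s) * (M + i)) by (apply Rmult_le_pos; [nra|lra]). nra.
Qed.

Lemma term2 s e i c a M : 0 < c -> 0 <= a -> Rabs s <= M -> Rabs i <= M ->
  2 * ng e * (c * s * i - a * e) <= 2 * c * M * (ng s * ng s + ng e * ng e + ng i * ng i).
Proof.
  intros H1 H2 Hs Hi. apply abs_bnd in Hs. apply abs_bnd in Hi.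
  destruct (ng_cases e) as [[He ->]|[He ->]].
  2: { assert (0 <= c * M * (ng s * ng s + 0 * 0 + ng i * ng i)).
       { apply Rmult_le_pos; [nra|]. nra. } nra. }
  assert (0 <= a * (e * e)) by nra.
  assert (e * s * i <= M * (ng s * ng s + e * e + ng i * ng i)).
  { destruct (ng_cases s) as [[Hs' ->]|[Hs' ->]]; destruct (ng_cases i) as [[Hi' ->]|[Hi' ->]].
    - assert (0 <= s * i) by nra. assert (e * (s * i) <= 0) by nra.
      assert (0 <= M * (s * s + e * e + i * i)) by (apply Rmult_le_pos; [lra | pose proof (sqp (e-i)); pose proof (sqp (e-s)); pose proof (sqp s); pose proof (sqp e); pose proof (sqp i); lra]). assert (0 <= M * (s*s+e*e+i*i)) by (apply Rmult_le_pos; [lra | pose proof (sqp (e-i)); pose proof (sqp (e-s)); pose proof (sqp s); pose proof (sqp e); pose proof (sqp i); lra]). nra.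
    - assert (0 <= e * s) by nra. assert (e * s * i <= e * s * M) by nra.
      assert (Hm : 0 <= M) by lra. pose proof (sqp (e - s)) as Hq.
      assert (0 <= M * ((e - s) * (e - s))) by (apply Rmult_le_pos; assumption).
      assert (0 <= M * (s * s + e * e)) by (apply Rmult_le_pos; nra). nra.
    - assert (0 <= e * i) by nra. assert (e * s * i <= M * (e * i)) by nra.
      assert (0 <= M * ((e - i) * (e - i))) by (apply Rmult_le_pos; [lra | pose proof (sqp (e-i)); pose proof (sqp (e-s)); pose proof (sqp s); pose proof (sqp e); pose proof (sqp i); lra]). assert (0 <= M * (s*s+e*e+i*i)) by (apply Rmult_le_pos; [lra | pose proof (sqp (e-i)); pose proof (sqp (e-s)); pose proof (sqp s); pose proof (sqp e); pose proof (sqp i); lra]). nra.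
    - assert (e * s <= 0) by nra. assert (e * s * i <= 0) by nra.
      assert (0 <= M * (0 * 0 + e * e + 0 * 0)) by (apply Rmult_le_pos; [lra | pose proof (sqp (e-i)); pose proof (sqp (e-s)); pose proof (sqp s); pose proof (sqp e); pose proof (sqp i); lra]). assert (0 <= M * (s*s+e*e+i*i)) by (apply Rmult_le_pos; [lra | pose proof (sqp (e-i)); pose proof (sqp (e-s)); pose proof (sqp s); pose proof (sqp e); pose proof (sqp i); lra]). nra. }
  assert (c * (e * s * i) <= c * (M * (ng s * ng s + e * e + ng i * ng i))) by (apply Rmult_le_compat_l; lra).
  nra.
Qed.

Lemma term3 e i sig g : 0 <= sig -> 0 <= g ->
  2 * ng i * (sig * e - g * i) <= 2 * sig * (ng e * ng e + ng i * ng i).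
Proof.
  intros H1 H2.
  destruct (ng_cases i) as [[Hi ->]|[Hi ->]].
  2: { assert (0 <= sig * (ng e * ng e)) by (apply Rmult_le_pos; [lra | apply sqp]). nra. }
  assert (0 <= g * (i * i)) by (apply Rmult_le_pos; [lra | apply sqp]).
  destruct (ng_cases e) as [[He ->]|[He ->]].
  - assert (0 <= sig * ((e - i) * (e - i))) by (apply Rmult_le_pos; [lra| apply sqp]). nra.
  - assert (i * e <= 0) by nra. assert (sig * (i * e) <= 0) by (rewrite <- (Rmult_0_r sig); apply Rmult_le_compat_l; lra). assert (0 <= sig * (i * i)) by (apply Rmult_le_pos; [lra | apply sqp]). nra.
Qed.

Lemma keyineq s e i muN c k a g sig M : 0 <= muN -> 0 < c -> 0 <= k -> 0 <= a -> 0 <= g -> 0 <= sig ->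
  Rabs s <= M -> Rabs i <= M ->
  2 * ng s * (muN - c * s * i - k * s) + 2 * ng e * (c * s * i - a * e) + 2 * ng i * (sig * e - g * i)
  <= 2 * (2 * c * M + sig) * (ng s * ng s + ng e * ng e + ng i * ng i).
Proof.
  intros. pose proof (term1 s i muN c k M) as T1. pose proof (term2 s e i c a M) as T2.
  pose proof (term3 e i sig g) as T3.
  assert (0 <= M) by (pose proof (Rabs_pos s); lra).
  assert (0 <= c * M * (ng e * ng e + ng i * ng i)) by (apply Rmult_le_pos; nra).
  assert (0 <= sig * (ng s * ng s)) by nra.
  nra.
Qed.

Lemma derive_mul_exp (f : R -> R) (x d K : R) : is_derive f x d ->
  is_derive (fun t => f t * exp (- K * t)) x ((d - K * f x) * exp (- K * x)).
Proof.
  intros H. auto_derive.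
  - exists d. exact H.
  - match goal with |- context [Derive ?g x] => replace (Derive g x) with d end.
    + ring.
    + symmetry. apply is_derive_unique. exact H.
Qed.

Lemma rc_exp K a : rc (fun t => exp (- K * t)) a.
Proof. apply (rc_of_derive _ a (- K * exp (- K * a))). auto_derive; [auto | ring]. Qed.

Lemma ng_nonneg x : 0 <= x -> ng x = 0.
Proof. intros H. unfold ng. apply Rmin_right. exact H. Qed.

Lemma positivity (S E I : R -> R) (muN c k a g sig : R) :
  0 <= muN -> 0 < c -> 0 <= k -> 0 <= a -> 0 <= g -> 0 <= sig ->
  rc S 0 -> rc E 0 -> rc I 0 ->
  (forall t, 0 < t -> is_derive S t (muN - c * S t * I t - k * S t) /\
                      is_derive E t (c * S t * I t - a * E t) /\
                      is_derive I t (sig * E t - g * I t)) ->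
  0 <= S 0 -> 0 <= E 0 -> 0 <= I 0 ->
  forall t, 0 <= t -> 0 <= S t /\ 0 <= E t /\ 0 <= I t.
Proof.
  intros HmuN Hc Hk Ha Hg Hsig HS HE HI Hd HS0 HE0 HI0 t1 Ht1.
  destruct (Req_dec t1 0) as [->|Hn]; [auto|].
  destruct (bound_compact S t1 HS (fun x Hx => ex_intro _ _ (proj1 (Hd x Hx))) Ht1) as [MS HMS].
  destruct (bound_compact I t1 HI (fun x Hx => ex_intro _ _ (proj2 (proj2 (Hd x Hx)))) Ht1) as [MI HMI].
  set (M := Rabs MS + Rabs MI).
  assert (HbS : forall t, 0 <= t <= t1 -> Rabs (S t) <= M).
  { intros t Ht. specialize (HMS t Ht). pose proof (Rle_abs MS). pose proof (Rabs_pos MI). unfold M. lra. }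
  assert (HbI : forall t, 0 <= t <= t1 -> Rabs (I t) <= M).
  { intros t Ht. specialize (HMI t Ht). pose proof (Rle_abs MI). pose proof (Rabs_pos MS). unfold M. lra. }
  set (K := 2 * (2 * c * M + sig)).
  set (Q := fun t => ng (S t) * ng (S t) + ng (E t) * ng (E t) + ng (I t) * ng (I t)).
  set (dQ := fun t => 2 * ng (S t) * (muN - c * S t * I t - k * S t) + 2 * ng (E t) * (c * S t * I t - a * E t)
                      + 2 * ng (I t) * (sig * E t - g * I t)).
  assert (HdQ : forall t, 0 < t -> is_derive Q t (dQ t)).
  { intros t Ht. destruct (Hd t Ht) as [H1 [H2 H3]].
    apply ng_comp_derive in H1. apply ng_comp_derive in H2. apply ng_comp_derive in H3.
    pose proof (is_derive_plus _ _ t _ _ (is_derive_plus _ _ t _ _ H1 H2) H3) as H.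
    replace (dQ t) with (2 * ng (S t) * (muN - c * S t * I t - k * S t) + 2 * ng (E t) * (c * S t * I t - a * E t)
                      + 2 * ng (I t) * (sig * E t - g * I t)) by reflexivity.
    replace (2 * ng (S t) * (muN - c * S t * I t - k * S t) + 2 * ng (E t) * (c * S t * I t - a * E t)
                      + 2 * ng (I t) * (sig * E t - g * I t)) with
      (2 * ng (S t) * (muN - c * S t * I t - k * S t) + 2 * ng (E t) * (c * S t * I t - a * E t)
                      + 2 * ng (I t) * (sig * E t - g * I t)) by ring.
    exact H. }
  assert (HrcQ : rc Q 0).
  { unfold Q. apply rc_plus; [apply rc_plus|].
    - apply (rc_comp (fun y => ng y * ng y) S 0 (ng_cont _) HS).
    - apply (rc_comp (fun y => ng y * ng y) E 0 (ng_cont _) HE).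
    - apply (rc_comp (fun y => ng y * ng y) I 0 (ng_cont _) HI). }
  set (h := fun t => Q t * exp (- K * t)).
  set (dh := fun t => (dQ t - K * Q t) * exp (- K * t)).
  assert (Hmono := mono h dh 0 t1 ltac:(lra) (rc_mult _ _ _ HrcQ (rc_exp K 0))
            (fun x Hx => derive_mul_exp Q x (dQ x) K (HdQ x Hx))).
  assert (Hh : h t1 <= h 0).
  { apply Hmono. intros x Hx. unfold dh.
    assert (0 < exp (- K * x)) by apply exp_pos.
    assert (dQ x <= K * Q x).
    { unfold dQ, Q, K. apply keyineq; auto; [apply HbS | apply HbI]; lra. }
    nra. }
  unfold h in Hh. replace (- K * 0) with 0 in Hh by ring. rewrite exp_0 in Hh.
  assert (HQ0 : Q 0 = 0).
  { unfold Q. rewrite (ng_nonneg _ HS0), (ng_nonneg _ HE0), (ng_nonneg _ HI0). ring. }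
  rewrite HQ0 in Hh.
  assert (0 < exp (- K * t1)) by apply exp_pos.
  assert (HQ1 : Q t1 <= 0) by nra.
  unfold Q in HQ1.
  pose proof (sqp (ng (S t1))). pose proof (sqp (ng (E t1))). pose proof (sqp (ng (I t1))).
  destruct (ng_cases (S t1)) as [[A1 B1]|[A1 B1]];
  destruct (ng_cases (E t1)) as [[A2 B2]|[A2 B2]];
  destruct (ng_cases (I t1)) as [[A3 B3]|[A3 B3]];
  rewrite ?B1, ?B2, ?B3 in *; repeat split; try lra; nra.
Qed.

Lemma isd_eq (f : R -> R) x d d' : is_derive f x d -> d = d' -> is_derive f x d'.
Proof. intros H <-. exact H. Qed.

Lemma isd_subc (f : R -> R) x d C : is_derive f x d -> is_derive (fun t => f t - C) x d.
Proof.
  intros H. auto_derive.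
  - exists d. exact H.
  - match goal with |- context [Derive ?g x] => replace (Derive g x) with d end.
    + ring.
    + symmetry. apply is_derive_unique. exact H.
Qed.

Lemma isd_lin (f g : R -> R) x d1 d2 al be : is_derive f x d1 -> is_derive g x d2 ->
  is_derive (fun t => al * f t + be * g t) x (al * d1 + be * d2).
Proof.
  intros H1 H2. auto_derive.
  - split; [exists d1; exact H1 | split; [exists d2; exact H2 | auto]].
  - match goal with |- context [Derive ?g x] => replace (Derive g x) with d1 end.
    + match goal with |- context [Derive ?g x] => replace (Derive g x) with d2 end.
      * ring.
      * symmetry. apply is_derive_unique. exact H2.
    + symmetry. apply is_derive_unique. exact H1.
Qed.

Lemma abs_le2 x B : x <= B -> - x <= B -> Rabs x <= B.
Proof. intros. unfold Rabs. destruct (Rcase_abs x); lra. Qed.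

Lemma rc_subc (f : R -> R) a C : rc f a -> rc (fun t => f t - C) a.
Proof. intros H. unfold Rminus. apply rc_plus; [exact H | apply rc_const]. Qed.

Lemma rc_lin (f g : R -> R) a al be : rc f a -> rc g a -> rc (fun t => al * f t + be * g t) a.
Proof. intros H1 H2. apply rc_plus; apply rc_mult; auto; apply rc_const. Qed.


Lemma lim_scal (f : R -> R) (l C : R) : is_lim f p_infty l -> is_lim (fun t => C * f t) p_infty (C * l).
Proof.
  intros H. apply lim_eps. intros eps He.
  destruct (eps_lim f l H (eps / (Rabs C + 1))) as [T HT].
  { apply Rdiv_lt_0_compat; [lra | pose proof (Rabs_pos C); lra]. }
  exists T. intros t Ht. specialize (HT t Ht).
  replace (C * f t - C * l) with (C * (f t - l)) by ring. rewrite Rabs_mult.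
  pose proof (Rabs_pos C). pose proof (Rabs_pos (f t - l)).
  assert ((Rabs C + 1) * Rabs (f t - l) < eps).
  { apply (Rmult_lt_compat_l (Rabs C + 1)) in HT; [|lra]. field_simplify in HT; lra. }
  nra.
Qed.

Section Core.
Variables (S E I Rr V : R -> R) (muN c k Ss a g sig gam mu pN Vs theta lam Dl : R).
Hypotheses (Hc : 0 < c) (Hk : 0 < k) (Ha : 0 < a) (Hg : 0 < g) (Hsig : 0 < sig)
  (Htheta : 0 < theta) (Hlam : 0 < lam) (Hmu : 0 < mu) (HpN : 0 <= pN) (Hgam : 0 <= gam)
  (HSs : 0 < Ss) (HDl : 0 < Dl)
  (HkSs : k * Ss = muN) (HpSs : pN * Ss = mu * Vs)
  (Hlam1 : lam <= a - theta) (Hlam2 : lam * theta <= theta * g - sig * c * (Ss + Dl))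
  (HrS : rc S 0) (HrE : rc E 0) (HrI : rc I 0) (HrR : rc Rr 0) (HrV : rc V 0)
  (HdS : forall t, 0 < t -> is_derive S t (muN - c * S t * I t - k * S t))
  (HdE : forall t, 0 < t -> is_derive E t (c * S t * I t - a * E t))
  (HdI : forall t, 0 < t -> is_derive I t (sig * E t - g * I t))
  (HdR : forall t, 0 < t -> is_derive Rr t (gam * I t - mu * Rr t))
  (HdV : forall t, 0 < t -> is_derive V t (pN * S t - mu * V t))
  (Hpos : forall t, 0 <= t -> 0 <= S t /\ 0 <= E t /\ 0 <= I t).

Let W := fun t => sig * E t + theta * I t.

Lemma W_derive t : 0 < t -> is_derive W t (sig * (c * S t * I t - a * E t) + theta * (sig * E t - g * I t)).
Proof. intros Ht. apply isd_lin; [apply HdE | apply HdI]; exact Ht. Qed.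

Lemma W_decay t : 0 < t -> S t <= Ss + Dl ->
  sig * (c * S t * I t - a * E t) + theta * (sig * E t - g * I t) <= - lam * W t + 0.
Proof.
  intros Ht HS. destruct (Hpos t ltac:(lra)) as [P1 [P2 P3]]. unfold W.
  assert (0 <= sig * E t) by nra.
  assert (sig * E t * (theta - a + lam) <= 0) by nra.
  assert (sig * c * S t <= sig * c * (Ss + Dl)) by (apply Rmult_le_compat_l; nra).
  assert (I t * (sig * c * S t - theta * g + lam * theta) <= 0) by nra.
  nra.
Qed.

Lemma u_up t : 0 <= t -> S t - Ss <= 0 / k + (S 0 - Ss - 0 / k) * exp (- k * (t - 0)).
Proof.
  intros Ht. apply (cmp (fun t => S t - Ss) (fun t => muN - c * S t * I t - k * S t) 0 k 0 Hk (rc_subc S 0 Ss HrS)).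
  - intros x Hx. apply isd_subc. apply HdS. exact Hx.
  - intros x Hx. destruct (Hpos x ltac:(lra)) as [P1 [P2 P3]].
    assert (0 <= c * S x * I x) by (apply Rmult_le_pos; [nra | lra]). nra.
  - exact Ht.
Qed.

Definition A1 := (sig + theta) / sig.
Definition A2 := (sig + theta) / theta.
Definition A3 := c * (Ss + Dl) * A2 / k.
Definition A4 := gam * A2 / mu.
Definition A5 := pN * (1 + A3) / mu.
Definition Kc := 1 + A1 + A2 + A3 + A4 + A5.

Lemma A_nonneg : 0 <= A1 /\ 0 <= A2 /\ 0 <= A3 /\ 0 <= A4 /\ 0 <= A5.
Proof.
  unfold A1, A2, A3, A4, A5.
  assert (0 <= (sig + theta) / sig) by (apply Rmult_le_pos; [lra | left; apply Rinv_0_lt_compat; lra]).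
  assert (0 <= (sig + theta) / theta) by (apply Rmult_le_pos; [lra | left; apply Rinv_0_lt_compat; lra]).
  assert (0 <= c * (Ss + Dl) * ((sig + theta) / theta) / k).
  { apply Rmult_le_pos; [|left; apply Rinv_0_lt_compat; lra]. apply Rmult_le_pos; nra. }
  repeat split; auto.
  - unfold A2. apply Rmult_le_pos; [|left; apply Rinv_0_lt_compat; lra]. apply Rmult_le_pos; lra.
  - unfold A3, A2. apply Rmult_le_pos; [|left; apply Rinv_0_lt_compat; lra]. apply Rmult_le_pos; lra.
Qed.

Lemma stab_core r : 0 <= r -> r <= Dl ->
  Rabs (S 0 - Ss) <= r -> Rabs (E 0) <= r -> Rabs (I 0) <= r -> Rabs (Rr 0) <= r -> Rabs (V 0 - Vs) <= r ->
  forall t, 0 <= t ->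
  Rabs (S t - Ss) <= Kc * r /\ Rabs (E t) <= Kc * r /\ Rabs (I t) <= Kc * r /\
  Rabs (Rr t) <= Kc * r /\ Rabs (V t - Vs) <= Kc * r.
Proof.
  intros Hr HrD H1 H2 H3 H4 H5 t Ht.
  apply abs_bnd in H1. apply abs_bnd in H2. apply abs_bnd in H3. apply abs_bnd in H4. apply abs_bnd in H5.
  destruct A_nonneg as [B1 [B2 [B3 [B4 B5]]]].
  assert (r * A1 >= 0) by nra. assert (r * A2 >= 0) by nra. assert (r * A3 >= 0) by nra.
  assert (r * A4 >= 0) by nra. assert (r * A5 >= 0) by nra.
  assert (Hu : forall s, 0 <= s -> S s - Ss <= r).
  { intros s Hs. apply Rle_trans with (Rmax (S 0 - Ss) (0 / k)).
    - apply (cmp_max (fun t => S t - Ss) (fun t => muN - c * S t * I t - k * S t) 0 k 0 Hk (rc_subc S 0 Ss HrS)).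
      + intros x Hx. apply isd_subc. apply HdS. exact Hx.
      + intros x Hx. destruct (Hpos x ltac:(lra)) as [P1 [P2 P3]].
        assert (0 <= c * S x * I x) by (apply Rmult_le_pos; [nra | lra]). nra.
      + exact Hs.
    - apply Rmax_lub; [lra|]. unfold Rdiv. rewrite Rmult_0_l. exact Hr. }
  assert (HW : forall s, 0 <= s -> W s <= (sig + theta) * r).
  { intros s Hs. apply Rle_trans with (Rmax (W 0) (0 / lam)).
    - apply (cmp_max W _ 0 lam 0 Hlam (rc_lin E I 0 sig theta HrE HrI) W_derive).
      + intros x Hx. apply W_decay; [exact Hx|]. specialize (Hu x ltac:(lra)). lra.
      + exact Hs.
    - apply Rmax_lub; unfold W; [nra|]. unfold Rdiv. rewrite Rmult_0_l. nra. }
  assert (HE : forall s, 0 <= s -> E s <= A1 * r).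
  { intros s Hs. specialize (HW s Hs). destruct (Hpos s Hs) as [P1 [P2 P3]]. unfold W in HW.
    unfold A1. apply (Rmult_le_reg_l sig); [lra|]. field_simplify; [|lra]. nra. }
  assert (HI : forall s, 0 <= s -> I s <= A2 * r).
  { intros s Hs. specialize (HW s Hs). destruct (Hpos s Hs) as [P1 [P2 P3]]. unfold W in HW.
    unfold A2. apply (Rmult_le_reg_l theta); [lra|]. field_simplify; [|lra]. nra. }
  assert (Hul : forall s, 0 <= s -> - (S s - Ss) <= r + A3 * r).
  { intros s Hs. apply Rle_trans with (Rmax (- (S 0 - Ss)) (c * (Ss + Dl) * (A2 * r) / k)).
    - apply (cmp_max (fun t => - (S t - Ss)) (fun t => - (muN - c * S t * I t - k * S t)) 0 k
               (c * (Ss + Dl) * (A2 * r)) Hk (rc_neg _ 0 (rc_subc S 0 Ss HrS))).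
      + intros x Hx. apply is_derive_neg. apply isd_subc. apply HdS. exact Hx.
      + intros x Hx. destruct (Hpos x ltac:(lra)) as [P1 [P2 P3]].
        specialize (Hu x ltac:(lra)). specialize (HI x ltac:(lra)).
        assert (c * S x <= c * (Ss + Dl)) by (apply Rmult_le_compat_l; lra).
        assert (c * S x * I x <= c * (Ss + Dl) * I x) by (apply Rmult_le_compat_r; lra).
        assert (c * (Ss + Dl) * I x <= c * (Ss + Dl) * (A2 * r)) by (apply Rmult_le_compat_l; nra).
        nra.
      + exact Hs.
    - apply Rmax_lub; [lra|]. assert (A3 * r = c * (Ss + Dl) * (A2 * r) / k) by (unfold A3; field; lra). lra. }
  assert (HuA : forall s, 0 <= s -> Rabs (S s - Ss) <= r + A3 * r).
  { intros s Hs. apply abs_le2; [specialize (Hu s Hs); lra | apply Hul; exact Hs]. }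
  assert (HR1 : Rr t <= r + A4 * r).
  { apply Rle_trans with (Rmax (Rr 0) (gam * (A2 * r) / mu)).
    - apply (cmp_max Rr _ 0 mu (gam * (A2 * r)) Hmu HrR HdR).
      + intros x Hx. specialize (HI x ltac:(lra)).
        assert (gam * I x <= gam * (A2 * r)) by (apply Rmult_le_compat_l; lra). lra.
      + exact Ht.
    - apply Rmax_lub; [lra|]. assert (A4 * r = gam * (A2 * r) / mu) by (unfold A4; field; lra). lra. }
  assert (HR2 : - Rr t <= r).
  { apply Rle_trans with (Rmax (- Rr 0) (0 / mu)).
    - apply (cmp_max (fun t => - Rr t) _ 0 mu 0 Hmu (rc_neg _ 0 HrR)
               (fun x Hx => is_derive_neg _ _ _ (HdR x Hx))).
      + intros x Hx. destruct (Hpos x ltac:(lra)) as [P1 [P2 P3]].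
        assert (0 <= gam * I x) by (apply Rmult_le_pos; lra). lra.
      + exact Ht.
    - apply Rmax_lub; [lra|]. unfold Rdiv. rewrite Rmult_0_l. exact Hr. }
  assert (HdV' : forall x, 0 < x -> is_derive (fun t => V t - Vs) x (pN * S x - mu * V x)).
  { intros x Hx. apply isd_subc. apply HdV. exact Hx. }
  assert (HV1 : V t - Vs <= r + A5 * r).
  { apply Rle_trans with (Rmax (V 0 - Vs) (pN * (r + A3 * r) / mu)).
    - apply (cmp_max (fun t => V t - Vs) _ 0 mu (pN * (r + A3 * r)) Hmu (rc_subc _ 0 Vs HrV) HdV').
      + intros x Hx. specialize (HuA x ltac:(lra)). apply abs_bnd in HuA.
        assert (pN * (S x - Ss) <= pN * (r + A3 * r)) by (apply Rmult_le_compat_l; lra). nra.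
      + exact Ht.
    - apply Rmax_lub; [lra|]. assert (A5 * r = pN * (r + A3 * r) / mu) by (unfold A5; field; lra). lra. }
  assert (HV2 : - (V t - Vs) <= r + A5 * r).
  { apply Rle_trans with (Rmax (- (V 0 - Vs)) (pN * (r + A3 * r) / mu)).
    - apply (cmp_max (fun t => - (V t - Vs)) _ 0 mu (pN * (r + A3 * r)) Hmu (rc_neg _ 0 (rc_subc _ 0 Vs HrV))
              (fun x Hx => is_derive_neg _ _ _ (HdV' x Hx))).
      + intros x Hx. specialize (HuA x ltac:(lra)). apply abs_bnd in HuA.
        assert (- (pN * (S x - Ss)) <= pN * (r + A3 * r)) by nra. nra.
      + exact Ht.
    - apply Rmax_lub; [lra|]. assert (A5 * r = pN * (r + A3 * r) / mu) by (unfold A5; field; lra). lra. }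
  destruct (Hpos t Ht) as [P1 [P2 P3]].
  specialize (HE t Ht). specialize (HI t Ht). specialize (HuA t Ht).
  unfold Kc. repeat split.
  - lra.
  - rewrite Rabs_pos_eq by lra. lra.
  - rewrite Rabs_pos_eq by lra. lra.
  - apply abs_le2; lra.
  - apply abs_le2; lra.
Qed.

Lemma conv_core : is_lim S p_infty Ss /\ is_lim E p_infty 0 /\ is_lim I p_infty 0 /\
  is_lim Rr p_infty 0 /\ is_lim V p_infty Vs.
Proof.
  destruct (exp_small k (S 0 - Ss) Dl 0 Hk HDl) as [T' HT'].
  set (T0 := Rmax T' 0 + 1).
  assert (HT0 : 0 < T0) by (unfold T0; pose proof (Rmax_r T' 0); lra).
  assert (HT0' : T' < T0) by (unfold T0; pose proof (Rmax_l T' 0); lra).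
  assert (HSb : forall t, T0 <= t -> S t <= Ss + Dl).
  { intros t Ht. pose proof (u_up t ltac:(lra)) as Hu. specialize (HT' t ltac:(lra)).
    unfold Rdiv in Hu. rewrite Rmult_0_l, Rminus_0_r, Rplus_0_l in Hu. lra. }
  assert (HWb : forall t, T0 <= t -> W t <= 0 / lam + (W T0 - 0 / lam) * exp (- lam * (t - T0))).
  { apply (cmp W _ T0 lam 0 Hlam (rc_of_derive W T0 _ (W_derive T0 HT0)) (fun x Hx => W_derive x ltac:(lra))).
    intros x Hx. apply W_decay; [lra|]. apply HSb. lra. }
  assert (HWl : forall eps, 0 < eps -> exists T, 0 <= T /\ forall t, T < t -> W t < eps).
  { intros eps He. destruct (exp_small lam (W T0) eps T0 Hlam He) as [T2 HT2].
    exists (Rmax T2 T0). split; [pose proof (Rmax_r T2 T0); lra|].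
    intros t Ht. pose proof (Rmax_l T2 T0). pose proof (Rmax_r T2 T0).
    specialize (HWb t ltac:(lra)). specialize (HT2 t ltac:(lra)).
    unfold Rdiv in HWb. rewrite Rmult_0_l, Rminus_0_r, Rplus_0_l in HWb. lra. }
  assert (HE : is_lim E p_infty 0).
  { apply lim_eps. intros eps He. destruct (HWl (eps * sig) ltac:(nra)) as [T [HT0T HT]].
    exists T. intros t Ht. specialize (HT t Ht). destruct (Hpos t ltac:(lra)) as [P1 [P2 P3]].
    unfold W in HT. rewrite Rminus_0_r, Rabs_pos_eq by lra.
    assert (0 <= theta * I t) by nra. nra. }
  assert (HI : is_lim I p_infty 0).
  { apply lim_eps. intros eps He. destruct (HWl (eps * theta) ltac:(nra)) as [T [HT0T HT]].
    exists T. intros t Ht. specialize (HT t Ht). destruct (Hpos t ltac:(lra)) as [P1 [P2 P3]].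
    unfold W in HT. rewrite Rminus_0_r, Rabs_pos_eq by lra.
    assert (0 <= sig * E t) by nra. nra. }
  assert (Hg0 : is_lim (fun t => - (c * S t * I t)) p_infty 0).
  { apply lim_eps. intros eps He.
    assert (Hcd : 0 < c * (Ss + Dl)) by nra.
    destruct (eps_lim I 0 HI (eps / (c * (Ss + Dl)))) as [T1 HT1].
    { apply Rdiv_lt_0_compat; lra. }
    exists (Rmax T1 T0). intros t Ht. pose proof (Rmax_l T1 T0). pose proof (Rmax_r T1 T0).
    specialize (HT1 t ltac:(lra)). destruct (Hpos t ltac:(lra)) as [P1 [P2 P3]].
    specialize (HSb t ltac:(lra)).
    rewrite Rminus_0_r, Rabs_pos_eq in HT1 by lra.
    rewrite Rminus_0_r, Rabs_Ropp, Rabs_pos_eq by (apply Rmult_le_pos; nra).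
    assert (c * S t * I t <= c * (Ss + Dl) * I t).
    { apply Rmult_le_compat_r; [lra|]. apply Rmult_le_compat_l; lra. }
    assert (c * (Ss + Dl) * I t < eps).
    { apply (Rmult_lt_compat_l (c * (Ss + Dl))) in HT1; [|lra]. field_simplify in HT1; lra. }
    lra. }
  assert (Hu : is_lim (fun t => S t - Ss) p_infty (0 / k)).
  { apply (lim_lin _ (fun t => - (c * S t * I t)) k 0 Hk); [|exact Hg0].
    intros t Ht. apply isd_subc. eapply isd_eq; [apply HdS; exact Ht|]. rewrite <- HkSs. match goal with |- ?A = ?B => change (@eq R A B) end; cbv beta; ring. }
  assert (HS : is_lim S p_infty Ss).
  { apply lim_eps. intros eps He. destruct (eps_lim _ _ Hu eps He) as [T HT].
    exists T. intros t Ht. specialize (HT t Ht). unfold Rdiv in HT. rewrite Rmult_0_l, Rminus_0_r in HT. exact HT. }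
  split; [exact HS|]. split; [exact HE|]. split; [exact HI|]. split.
  - assert (H := lim_lin Rr (fun t => gam * I t) mu (gam * 0) Hmu).
    replace (gam * 0 / mu) with 0 in H by (field; lra). apply H.
    + intros t Ht. eapply isd_eq; [apply HdR; exact Ht| match goal with |- ?A = ?B => change (@eq R A B) end; cbv beta; ring].
    + apply lim_scal. exact HI.
  - assert (H := lim_lin V (fun t => pN * S t) mu (pN * Ss) Hmu).
    replace (pN * Ss / mu) with Vs in H by (rewrite HpSs; field; lra). apply H.
    + intros t Ht. eapply isd_eq; [apply HdV; exact Ht| match goal with |- ?A = ?B => change (@eq R A B) end; cbv beta; ring].
    + apply lim_scal. exact HS.
Qed.

End Core.

Lemma sol_prep (N mu beta sigma gamma p rho : R) (S E I Rr V : R -> R) : 0 < N ->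
  is_solution N mu beta sigma gamma p rho S E I Rr V ->
  (rc S 0 /\ rc E 0 /\ rc I 0 /\ rc Rr 0 /\ rc V 0) /\
  (forall t, 0 < t -> is_derive S t (mu * N - (beta * (1 - rho) / N) * S t * I t - (p / N + mu) * S t)) /\
  (forall t, 0 < t -> is_derive E t ((beta * (1 - rho) / N) * S t * I t - (sigma + mu) * E t)) /\
  (forall t, 0 < t -> is_derive I t (sigma * E t - (gamma + mu) * I t)) /\
  (forall t, 0 < t -> is_derive Rr t (gamma * I t - mu * Rr t)) /\
  (forall t, 0 < t -> is_derive V t (p / N * S t - mu * V t)).
Proof.
  intros HN [[H1 [H2 [H3 [H4 H5]]]] Hd].
  split; [unfold rc; tauto|].
  refine (conj _ (conj _ (conj _ (conj _ _)))); intros t Ht; destruct (Hd t Ht) as [D1 [D2 [D3 [D4 D5]]]].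
  - eapply isd_eq; [exact D1|]. match goal with |- ?A = ?B => change (@eq R A B) end; field. lra.
  - eapply isd_eq; [exact D2|]. match goal with |- ?A = ?B => change (@eq R A B) end; field. lra.
  - exact D3.
  - exact D4.
  - exact D5.
Qed.

Theorem mainTheorem7 (N mu beta sigma gamma p rho : R) :
  0 < N -> 0 < mu -> 0 < beta -> 0 < sigma -> 0 < gamma -> 0 < p ->
  0 < rho -> rho < 1 ->
  basic_repr_number N mu beta sigma gamma p rho < 1 ->
  GAS_in_Sigma N mu beta sigma gamma p rho.
Proof.
  intros HN Hmu Hb Hs Hg Hp Hr0 Hr1 HR0.
  assert (Hc : 0 < beta * (1 - rho) / N) by (apply Rdiv_lt_0_compat; nra).
  assert (Hk : 0 < p / N + mu) by (assert (0 < p / N) by (apply Rdiv_lt_0_compat; lra); lra).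
  assert (HpN : 0 <= p / N) by (left; apply Rdiv_lt_0_compat; lra).
  assert (HpmN : 0 < p + mu * N) by nra.
  assert (HSs : 0 < Sstar N mu p) by (unfold Sstar; apply Rdiv_lt_0_compat; [apply Rmult_lt_0_compat; [lra | apply pow_lt; lra] | lra]).
  assert (HkSs : (p / N + mu) * Sstar N mu p = mu * N) by (unfold Sstar; field; lra).
  assert (HpSs : p / N * Sstar N mu p = mu * Vstar N mu p) by (unfold Sstar, Vstar; field; lra).
  set (c := beta * (1 - rho) / N) in *.
  set (Ss := Sstar N mu p) in *.
  set (a := sigma + mu). set (g := gamma + mu).
  assert (Ha : 0 < a) by (unfold a; lra). assert (Hgg : 0 < g) by (unfold g; lra).
  assert (HD : sigma * c * Ss < a * g).
  { assert (basic_repr_number N mu beta sigma gamma p rho = sigma * c * Ss / (a * g)).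
    { unfold basic_repr_number, c, Ss, Sstar, a, g. field. repeat split; lra. }
    rewrite H in HR0. apply (Rmult_lt_compat_r (a * g)) in HR0; [|nra].
    field_simplify in HR0; lra. }
  set (D := a * g - sigma * c * Ss).
  assert (HD0 : 0 < D) by (unfold D; lra).
  assert (Hsc : 0 < sigma * c * Ss) by (apply Rmult_lt_0_compat; nra).
  set (theta := (sigma * c * Ss / g + a) / 2).
  assert (Hth : 0 < theta).
  { unfold theta. assert (0 < sigma * c * Ss / g) by (apply Rdiv_lt_0_compat; lra). lra. }
  set (Dl := D / (4 * (sigma * c))).
  assert (HDl : 0 < Dl) by (unfold Dl; apply Rdiv_lt_0_compat; nra).
  set (lam := Rmin (D / (2 * g)) (D / (4 * theta))).
  assert (Hlam : 0 < lam).
  { unfold lam. apply Rmin_glb_lt; apply Rdiv_lt_0_compat; lra. }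
  assert (Hlam1 : lam <= a - theta).
  { assert (a - theta = D / (2 * g)) by (unfold theta, D; field; lra).
    rewrite H. apply Rmin_l. }
  assert (Hlam2 : lam * theta <= theta * g - sigma * c * (Ss + Dl)).
  { assert (theta * g - sigma * c * (Ss + Dl) = D / (4 * theta) * theta).
    { assert (0 < a * g) by nra. unfold theta, Dl, D. field. repeat split; lra. }
    rewrite H. apply Rmult_le_compat_r; [lra | apply Rmin_r]. }
  assert (Hpos : forall S E I Rr V : R -> R,
     is_solution N mu beta sigma gamma p rho S E I Rr V ->
     in_Sigma N (S 0) (E 0) (I 0) (Rr 0) (V 0) ->
     forall t, 0 <= t -> 0 <= S t /\ 0 <= E t /\ 0 <= I t).
  { intros S E I Rr V Hsol HS.
    destruct (sol_prep N mu beta sigma gamma p rho S E I Rr V HN Hsol) as [[R1 [R2 [R3 [R4 R5]]]] [D1 [D2 [D3 [D4 D5]]]]].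
    destruct HS as [S0 [E0 [I0 _]]].
    apply (positivity S E I (mu * N) c (p / N + mu) a g sigma); try lra; auto.
    nra. }
  split.
  - intros eps Heps.
    set (K := Kc c (p / N + mu) Ss sigma gamma mu (p / N) theta Dl).
    assert (HK : 0 < K).
    { unfold K, Kc. destruct (A_nonneg c (p / N + mu) Ss sigma gamma mu (p / N) theta Dl) as [B1 [B2 [B3 [B4 B5]]]];
      auto; lra. }
    exists (Rmin Dl (eps / (2 * K))). split.
    { apply Rmin_glb_lt; [lra|]. apply Rdiv_lt_0_compat; lra. }
    intros S E I Rr V Hsol HS Hd0 t Ht.
    assert (HP := Hpos S E I Rr V Hsol HS).
    destruct (sol_prep N mu beta sigma gamma p rho S E I Rr V HN Hsol) as [[R1 [R2 [R3 [R4 R5]]]] [D1 [D2 [D3 [D4 D5]]]]].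
    set (r := dist_Pstar N mu p (S 0) (E 0) (I 0) (Rr 0) (V 0)) in *.
    assert (Hq1 : Rabs (S 0 - Ss) <= r) by apply Rmax_l.
    assert (Hq2 : Rabs (E 0) <= r) by (eapply Rle_trans; [|apply Rmax_r]; apply Rmax_l).
    assert (Hq3 : Rabs (I 0) <= r) by (eapply Rle_trans; [|apply Rmax_r]; eapply Rle_trans; [|apply Rmax_r]; apply Rmax_l).
    assert (Hq4 : Rabs (Rr 0) <= r) by (eapply Rle_trans; [|apply Rmax_r]; eapply Rle_trans; [|apply Rmax_r];
       eapply Rle_trans; [|apply Rmax_r]; apply Rmax_l).
    assert (Hq5 : Rabs (V 0 - Vstar N mu p) <= r) by (eapply Rle_trans; [|apply Rmax_r]; eapply Rle_trans; [|apply Rmax_r];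
       eapply Rle_trans; [|apply Rmax_r]; apply Rmax_r).
    assert (Hrn : 0 <= r) by (pose proof (Rabs_pos (S 0 - Ss)); lra).
    pose proof (Rmin_l Dl (eps / (2 * K))). pose proof (Rmin_r Dl (eps / (2 * K))).
    destruct (stab_core S E I Rr V (mu * N) c (p / N + mu) Ss a g sigma gamma mu (p / N) (Vstar N mu p) theta lam Dl
                Hc Hk Hs Hth Hlam Hmu HpN ltac:(lra) HSs HDl HkSs HpSs Hlam1 Hlam2 R1 R2 R3 R4 R5 D1 D2 D3 D4 D5 HP
                r Hrn ltac:(lra) Hq1 Hq2 Hq3 Hq4 Hq5 t Ht) as [B1 [B2 [B3 [B4 B5]]]].
    fold K in B1, B2, B3, B4, B5.
    assert (K * r < eps).
    { assert (K * r < K * (eps / (2 * K))) by (apply Rmult_lt_compat_l; lra).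
      assert (K * (eps / (2 * K)) = eps / 2) by (field; lra). lra. }
    unfold dist_Pstar. fold Ss.
    repeat apply Rmax_lub_lt; lra.
  - intros S E I Rr V Hsol HS.
    assert (HP := Hpos S E I Rr V Hsol HS).
    destruct (sol_prep N mu beta sigma gamma p rho S E I Rr V HN Hsol) as [[R1 [R2 [R3 [R4 R5]]]] [D1 [D2 [D3 [D4 D5]]]]].
    exact (conv_core S E I Rr V (mu * N) c (p / N + mu) Ss a g sigma gamma mu (p / N) (Vstar N mu p) theta lam Dl
             Hc Hk Hs Hth Hlam Hmu HSs HDl HkSs HpSs Hlam1 Hlam2 R1 D1 D2 D3 D4 D5 HP).
Qed.
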